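(* Let $\mu$ be a partition of $n$ and let $x_2^{\alpha_2}\cdots x_n^{\alpha_n}\in\mathcal{A}(\mu)$ be a monomial of degree $r$. Run the following procedure: set $\rho^{(n)}=\mu$; for $i=n,n-1,\dots,2$, impose the dimension-ordering on the current composition $\rho^{(i)}$, place the number $i$ in the box with dimension-order label $\alpha_i+1$, and delete that box to obtain a composition $\rho^{(i-1)}$ of $i-1$; finally place $1$ in the one remaining box, and let $T$ be the resulting filling of $\mu$ (all placed numbers restored). Then at every step the box with label $\alpha_i+1$ exists, $T$ is a row-strict filling of $\mu$ with exactly $r$ dimension pairs, and $\Phi(T)=x_2^{\alpha_2}\cdots x_n^{\alpha_n}$. Consequently, setting $\Psi(x^\alpha):=T$ defines a degree-preserving map $\Psi$ from $\mathcal{A}(\mu)$ to row-strict fillings of $\mu$ with $\Phi\circ\Psi=\mathrm{id}_{\mathcal{A}(\mu)}$.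
   Context: A composition $\rho$ of $n$ is a sequence of nonnegative integers summing to $n$, drawn with $\rho_k$ left-justified boxes in row $k$ (rows top to bottom, columns left to right); a partition is a weakly decreasing composition with positive parts. A filling places $1,\dots,n$ bijectively in the boxes; row-strict means entries increase left to right in each row. Dimension-ordering of a composition with $r$ nonzero rows: the far-right boxes of the nonzero rows are labelled $1,\dots,r$ in the order obtained by sorting them by column from rightmost column to leftmost, and within a column from top to bottom. Dimension pairs (with $h(j)=j$): $(a,b)$ is a dimension pair of a filling $T$ if (1) $b>a$; (2) $b$ lies in the same column as $a$ strictly below it, or in a column strictly left of $a$'s; (3) if a box immediately right of $a$ exists, containing $c$, then $b\le c$. $D^T_j$ is the set of dimension pairs $(a,j)$; $\Phi(T)=\prod_{j=2}^n x_j^{|D^T_j|}$. $\mathcal{A}(\mu)=\{\Phi(T): T \text{ a row-strict filling of }\mu\}$. *)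

(* Defs.v *)
From mathcomp Require Import all_boot.
Set Implicit Arguments. Unset Strict Implicit. Unset Printing Implicit Defensive.

(* A composition is a seq nat (row k has [nth 0 rho k] boxes, rows top to
   bottom, index 0 = top row).  A filling of a composition is a seq (seq nat):
   row k lists the entries of row k from left to right. *)

Definition is_partition (mu : seq nat) : bool :=
  sorted geq mu && all (fun x => 0 < x) mu.

Definition is_filling (n : nat) (mu : seq nat) (T : seq (seq nat)) : bool :=
  (shape T == mu) && perm_eq (flatten T) (iota 1 n).

Definition row_strict (T : seq (seq nat)) : bool := all (sorted ltn) T.

Definition row_of (T : seq (seq nat)) (a : nat) : nat := find (fun row => a \in row) T.
Definition col_of (T : seq (seq nat)) (a : nat) : nat := index a (nth [::] T (row_of T a)).

(* (a,b) is a dimension pair of T (with h(j) = j) *)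
Definition dim_pair (T : seq (seq nat)) (a b : nat) : bool :=
  let ra := row_of T a in let ca := col_of T a in
  let rb := row_of T b in let cb := col_of T b in
  let rowa := nth [::] T ra in
  [&& a < b,
      ((cb == ca) && (ra < rb)) || (cb < ca)
    & (ca.+1 < size rowa) ==> (b <= nth 0 rowa ca.+1)].

(* Phi(T) = prod_{j=2}^n x_j^{|D_j|}, encoded as its exponent sequence
   [:: |D_2|; ...; |D_n|]. *)
Definition Phi (n : nat) (T : seq (seq nat)) : seq nat :=
  [seq count (fun a => dim_pair T a j) (iota 1 n) | j <- iota 2 n.-1].

Definition num_dim_pairs (n : nat) (T : seq (seq nat)) : nat :=
  \sum_(a <- iota 1 n) \sum_(b <- iota 1 n) dim_pair T a b.

Definition in_A (n : nat) (mu : seq nat) (alpha : seq nat) : Prop :=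
  exists T, [/\ is_filling n mu T, row_strict T & Phi n T = alpha].

(* Dimension-ordering: list of the nonzero rows of rho, in label order
   (label l = position l-1): sorted by column of the far-right box from
   rightmost to leftmost (i.e. by decreasing row length), ties broken
   top to bottom. *)
Definition dim_rel (rho : seq nat) (k1 k2 : nat) : bool :=
  (nth 0 rho k2 < nth 0 rho k1) || ((nth 0 rho k1 == nth 0 rho k2) && (k1 <= k2)).

Definition dim_order (rho : seq nat) : seq nat :=
  sort (dim_rel rho) [seq k <- iota 0 (size rho) | 0 < nth 0 rho k].

(* exponent used at step i; step i = 1 (place 1 in the unique remaining box)
   is encoded as choosing label 1 *)
Definition expo (alpha : seq nat) (i : nat) : nat :=
  if i is 1 then 0 else nth 0 alpha (i - 2).

(* The procedure: returns the positions (row, column) where i, i-1, ..., 1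
   are placed, or None if at some step the required label does not exist. *)
Fixpoint procedure (alpha : seq nat) (i : nat) (rho : seq nat)
  : option (seq (nat * nat)) :=
  match i with
  | 0 => Some [::]
  | i'.+1 =>
      let ord := dim_order rho in
      if expo alpha i < size ord then
        let k := nth 0 ord (expo alpha i) in
        let c := (nth 0 rho k).-1 in
        match procedure alpha i' (set_nth 0 rho k c) with
        | Some s => Some ((k, c) :: s)
        | None => None
        end
      else None
  end.

Definition fill (n : nat) (mu : seq nat) (s : seq (nat * nat)) : seq (seq nat) :=
  [seq [seq n - index (k, c) s | c <- iota 0 (nth 0 mu k)] | k <- iota 0 (size mu)].

Definition Psi (n : nat) (mu : seq nat) (alpha : seq nat) : option (seq (seq nat)) :=
  match procedure alpha n mu with
  | Some s => Some (fill n mu s)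
  | None => None
  end.

(* Main.v *)
Require Import Defs.
From mathcomp Require Import all_boot.
Set Implicit Arguments. Unset Strict Implicit. Unset Printing Implicit Defensive.

Lemma prefix_le (s : seq nat) j c : sorted ltn s -> c < size s ->
  (nth 0 s c <= j) = (c < count (fun x => x <= j) s).
Proof.
elim: s c => [|x s IH] c //= Hs Hc.
have Hs' : sorted ltn s by move: Hs; case: s {IH Hc} => //= y s /andP[].
have Hall : all (fun y => x < y) s.
  by move: Hs; rewrite (path_sortedE ltn_trans) => /andP[].
case: (leqP x j) => Hx.
- case: c Hc => [|c] Hc /=; first by rewrite Hx.
  by rewrite IH.
- have -> : count (fun x0 => x0 <= j) s = 0.
    apply/eqP; rewrite -leqn0 leqNgt -has_count; apply/negP=> /hasP[y Hy Hyj].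
    have := allP Hall y Hy => Hxy.
    by move: (leq_trans Hxy Hyj); rewrite ltnNge (ltnW Hx).
  case: c Hc => [|c] Hc /=; first by rewrite leqNgt Hx.
  apply/negbTE; rewrite -ltnNge.
  have Hin : nth 0 s c \in s by apply: mem_nth.
  exact: (ltn_trans Hx (allP Hall _ Hin)).
Qed.

Lemma flat_uniq_row (T : seq (seq nat)) a k k' : uniq (flatten T) ->
  a \in nth [::] T k -> a \in nth [::] T k' -> k = k'.
Proof.
elim: T k k' => [|r T IH] k k' /=; first by case: k.
rewrite cat_uniq => /and3P[_ Hdis HU].
have Hf : forall i, a \in nth [::] T i -> a \in flatten T.
  move=> i Hi; apply/flattenP; exists (nth [::] T i) => //.
  by apply: mem_nth; case: (ltnP i (size T)) => // /(nth_default [::]) E; rewrite E in Hi.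
case: k => [|k]; case: k' => [|k'] //= Ha Hb.
- by move: Hdis; rewrite (_ : has _ _ = true) //; apply/hasP; exists a => //; exact: Hf Hb.
- by move: Hdis; rewrite (_ : has _ _ = true) //; apply/hasP; exists a => //; exact: Hf Ha.
- by rewrite (IH k k' HU Ha Hb).
Qed.

Lemma index_sorted (T : eqType) (r : rel T) (L : seq T) k :
  transitive r -> (forall x y, r x y -> r y x -> x = y) ->
  sorted r L -> uniq L -> k \in L ->
  index k L = count (fun x => r x k && (x != k)) L.
Proof.
move=> Htr Hanti Hs HU Hk.
have Hsplit := cat_take_drop (index k L) L.
rewrite (drop_nth k) ?index_mem // nth_index // in Hsplit.
set L1 := take _ L in Hsplit; set L2 := drop _ L in Hsplit.
have HP : pairwise r (L1 ++ k :: L2) by rewrite Hsplit -sorted_pairwise.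
move: HP; rewrite pairwise_cat allrel_consr /= => /and3P[/andP[H1 _] _ /andP[H2 _]].
have HU' : uniq (L1 ++ k :: L2) by rewrite Hsplit.
rewrite -Hsplit count_cat /= eqxx andbF add0n.
have Hk1 : k \notin L1.
  by move: HU'; rewrite cat_uniq /= => /and3P[_ /norP[Hx _] _].
have Hk2 : k \notin L2 by move: HU'; rewrite cat_uniq /= => /and3P[_ _ /andP[]].
have -> : count (fun x => r x k && (x != k)) L2 = 0.
  apply/eqP; rewrite -leqn0 leqNgt -has_count; apply/negP=> /hasP[y Hy /andP[Hyk Hne]].
  have Hky := allP H2 y Hy.
  by move: Hne; rewrite (Hanti _ _ Hyk Hky) eqxx.
rewrite addn0.
have -> : count (fun x => r x k && (x != k)) L1 = size L1.
  rewrite -count_predT; apply: eq_in_count => y Hy /=.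
  rewrite (allP H1 y Hy) /=; apply/eqP=> E; subst y; by rewrite Hy in Hk1.
by rewrite index_cat (negbTE Hk1) /= eqxx addn0.
Qed.

Lemma dim_rel_trans rho : transitive (dim_rel rho).
Proof.
move=> y x z; rewrite /dim_rel.
move=> /orP[H1|/andP[/eqP H1 H2]] /orP[H3|/andP[/eqP H3 H4]]; apply/orP.
- by left; exact: ltn_trans H3 H1.
- by left; rewrite -H3.
- by left; rewrite H1.
- by right; rewrite H1 H3 eqxx (leq_trans H2 H4).
Qed.

Lemma dim_rel_total rho : total (dim_rel rho).
Proof.
move=> x y; rewrite /dim_rel.
case: (ltngtP (nth 0 rho x) (nth 0 rho y)) => H //=.
by rewrite leq_total.
Qed.

Lemma dim_rel_anti rho x y : dim_rel rho x y -> dim_rel rho y x -> x = y.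
Proof.
rewrite /dim_rel.
case: (ltngtP (nth 0 rho x) (nth 0 rho y)) => H //=.
by move=> H1 H2; apply/eqP; rewrite eqn_leq H1 H2.
Qed.

Lemma dim_order_mem rho k : 0 < nth 0 rho k -> k < size rho -> k \in dim_order rho.
Proof.
move=> H1 H2; rewrite /dim_order mem_sort mem_filter H1 mem_iota /= add0n H2.
done.
Qed.

Lemma index_dim_order rho k : 0 < nth 0 rho k -> k < size rho ->
  index k (dim_order rho) =
  count (fun k' => [&& 0 < nth 0 rho k', dim_rel rho k' k & k' != k]) (iota 0 (size rho)).
Proof.
move=> H1 H2.
rewrite (index_sorted (@dim_rel_trans rho) (@dim_rel_anti rho)) //;
  last first.
- exact: dim_order_mem.
- by rewrite /dim_order sort_uniq filter_uniq // iota_uniq.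
- exact: sort_sorted (@dim_rel_total rho) _.
rewrite /dim_order (permP (permEl (perm_sort _ _))) count_filter.
by apply: eq_count => x /=; rewrite andbC.
Qed.

Definition rho (T : seq (seq nat)) j := [seq count (fun x => x <= j) r | r <- T].

Lemma nth_rho T j k : nth 0 (rho T j) k = count (fun x => x <= j) (nth [::] T k).
Proof.
case: (ltnP k (size T)) => Hk; first by rewrite (nth_map [::]).
by rewrite !nth_default // size_map.
Qed.

Lemma row_sorted T k : row_strict T -> sorted ltn (nth [::] T k).
Proof.
move=> HR; case: (ltnP k (size T)) => Hk; last by rewrite nth_default.
exact: (allP HR _ (mem_nth _ Hk)).
Qed.

Lemma row_uniq T k : row_strict T -> uniq (nth [::] T k).
Proof. move=> HR; exact: sorted_uniq ltn_trans ltnn _ (row_sorted k HR). Qed.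

Lemma in_row T a : a \in flatten T ->
  row_of T a < size T /\ a \in nth [::] T (row_of T a).
Proof.
move=> /flattenP[r Hr Ha].
have Hh : has (fun row => a \in row) T by apply/hasP; exists r.
split; first by rewrite /row_of -has_find.
exact: (nth_find [::] Hh).
Qed.

Lemma row_of_in T a k : uniq (flatten T) -> a \in nth [::] T k -> row_of T a = k.
Proof.
move=> HU Ha.
have Hk : k < size T by case: (ltnP k (size T)) => // H; rewrite nth_default in Ha.
have Hf : a \in flatten T by apply/flattenP; exists (nth [::] T k) => //; exact: mem_nth.
have [_ H2] := in_row Hf.
exact: flat_uniq_row HU H2 Ha.
Qed.

Lemma col_of_in T a : a \in flatten T ->
  col_of T a < size (nth [::] T (row_of T a)) /\ nth 0 (nth [::] T (row_of T a)) (col_of T a) = a.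
Proof.
move=> Hf; have [_ H2] := in_row Hf.
by rewrite /col_of index_mem nth_index.
Qed.

Lemma pos_entry T k c : uniq (flatten T) -> row_strict T -> c < size (nth [::] T k) ->
  row_of T (nth 0 (nth [::] T k) c) = k /\ col_of T (nth 0 (nth [::] T k) c) = c.
Proof.
move=> HU HR Hc.
have Hr : row_of T (nth 0 (nth [::] T k) c) = k by apply: row_of_in HU _; exact: mem_nth.
split => //; rewrite /col_of Hr index_uniq //; exact: row_uniq.
Qed.

Lemma rho_row_of T j : uniq (flatten T) -> row_strict T -> j \in flatten T ->
  nth 0 (rho T j) (row_of T j) = (col_of T j).+1.
Proof.
move=> HU HR Hf.
have [Hc Hj] := col_of_in Hf.
set k := row_of T j in Hc Hj *; set cj := col_of T j in Hc Hj *.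
have Hs := row_sorted k HR.
rewrite nth_rho.
have H1 : cj < count (fun x => x <= j) (nth [::] T k) by rewrite -prefix_le // Hj.
apply/eqP; rewrite eqn_leq H1 andbT.
rewrite leqNgt; apply/negP => H2.
have Hsz : cj.+1 < size (nth [::] T k) := leq_trans H2 (count_size _ _).
have H3 : nth 0 (nth [::] T k) cj.+1 <= j by rewrite prefix_le.
have H4 := sorted_ltn_nth ltn_trans 0 Hs.
have H5 : nth 0 (nth [::] T k) cj < nth 0 (nth [::] T k) cj.+1 by apply: H4 => //; rewrite inE ltnW.
by move: (leq_trans H5 H3); rewrite Hj ltnn.
Qed.

Lemma dim_pair_char T j a : uniq (flatten T) -> row_strict T ->
  j \in flatten T -> a \in flatten T ->
  dim_pair T a j = [&& nth 0 (rho T j) (row_of T a) == (col_of T a).+1,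
                       row_of T a != row_of T j &
                       dim_rel (rho T j) (row_of T a) (row_of T j)].
Proof.
move=> HU HR Hjf Haf.
have Hrk := rho_row_of HU HR Hjf.
have [Hcj Hj] := col_of_in Hjf.
have [Hca Ha] := col_of_in Haf.
rewrite /dim_pair /dim_rel /=.
move: Hrk Hcj Hj Hca Ha.
set k := row_of T j; set cj := col_of T j; set ra := row_of T a; set ca := col_of T a.
set R := nth [::] T ra.
move=> Hrk Hcj Hj Hca Ha.
have HsR := row_sorted ra HR.
have Pa : forall c, c < size R -> (nth 0 R c <= j) = (c < nth 0 (rho T j) ra).
  by move=> c Hc; rewrite nth_rho prefix_le.
have HrS : nth 0 (rho T j) ra <= size R by rewrite nth_rho count_size.
rewrite Hrk.
apply/idP/idP.
- case/and3P => Hlt Hc2 Hc3.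
  have Hne : ra != k.
    apply/eqP => E.
    have Hlt' : ca < cj.
      case: (ltngtP ca cj) => // H.
      + have := sorted_ltn_nth ltn_trans 0 HsR.
        move=> /(_ cj ca); rewrite !inE -/R => /(_ _ _ H).
        rewrite Ha /R E Hj => /(_ Hcj) X.
        have : ca < size R by [].
        by rewrite /R E => /X Y; move: (ltn_trans Y Hlt); rewrite ltnn.
      + by move: Hlt; rewrite -Ha -Hj /R E H ltnn.
    move: Hc2; rewrite E ltnn andbF /=.
    by rewrite ltnNge (ltnW Hlt').
  have Hle : ca < nth 0 (rho T j) ra by rewrite -Pa // Ha ltnW.
  have Hra : nth 0 (rho T j) ra = ca.+1.
    apply/eqP; rewrite eqn_leq Hle andbT leqNgt; apply/negP => H.
    have Hsz : ca.+1 < size R := leq_trans H HrS.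
    have H1 : nth 0 R ca.+1 <= j by rewrite Pa.
    have H2 : j <= nth 0 R ca.+1 by move: Hc3; rewrite Hsz.
    have Heq : nth 0 R ca.+1 = j by apply/eqP; rewrite eqn_leq H1 H2.
    have : row_of T j = ra by apply: row_of_in HU _; rewrite -Heq; exact: mem_nth.
    by rewrite -/k => E; move: Hne; rewrite E eqxx.
  rewrite Hra eqxx Hne /= ltnS eqSS.
  case/orP: Hc2 => [/andP[/eqP -> H]|H]; last by rewrite H.
  by rewrite eqxx ltnn /= ltnW.
- case/and3P => /eqP Hra Hne Hdr.
  have Hle : a <= j by rewrite -Ha Pa // Hra.
  have Hnej : a != j.
    apply/eqP => E; move: Hne; rewrite /ra E -/k eqxx //.
  rewrite ltn_neqAle Hnej Hle /=.
  move: Hdr; rewrite Hra ltnS eqSS => Hdr.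
  apply/andP; split.
  + case/orP: Hdr => [->|/andP[/eqP -> H]]; first by rewrite orbT.
    by rewrite eqxx ltnn orbF /= ltn_neqAle H andbT Hne.
  + apply/implyP => Hsz.
    have := Pa _ Hsz; rewrite Hra ltnn => /negbT.
    by rewrite -ltnNge => /ltnW.
Qed.

Lemma count_dim T n j : perm_eq (flatten T) (iota 1 n) -> row_strict T ->
  j \in flatten T ->
  count (fun a => dim_pair T a j) (iota 1 n) = index (row_of T j) (dim_order (rho T j)).
Proof.
move=> Hp HR Hjf.
have HU : uniq (flatten T) by rewrite (perm_uniq Hp) iota_uniq.
have Hrk := rho_row_of HU HR Hjf.
have [Hk _] := in_row Hjf.
set k := row_of T j in Hrk Hk *.
rewrite index_dim_order ?Hrk // ?size_map //.
set Q := (fun k' => [&& 0 < nth 0 (rho T j) k', dim_rel (rho T j) k' k & k' != k]).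
pose e k' := nth 0 (nth [::] T k') (nth 0 (rho T j) k').-1.
pose S := map e (filter Q (iota 0 (size T))).
have He : forall k', k' \in filter Q (iota 0 (size T)) ->
   row_of T (e k') = k' /\ col_of T (e k') = (nth 0 (rho T j) k').-1 /\ e k' \in flatten T
   /\ 0 < nth 0 (rho T j) k'.
  move=> k'; rewrite mem_filter /Q => /andP[/and3P[Hpos _ _] Hin].
  have Hsz : (nth 0 (rho T j) k').-1 < size (nth [::] T k').
    rewrite prednK //; rewrite nth_rho; exact: count_size.
  have [H1 H2] := pos_entry HU HR Hsz.
  do 3 (split => //).
  apply/flattenP; exists (nth [::] T k'); last exact: mem_nth.
  by apply: mem_nth; move: Hin; rewrite mem_iota.
have HS : uniq S.
  rewrite map_inj_in_uniq ?filter_uniq ?iota_uniq //.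
  move=> x y Hx Hy E; have [Hx1 _] := He x Hx; have [Hy1 _] := He y Hy.
  by rewrite -Hx1 E Hy1.
have HSsub : forall x, x \in S -> x \in iota 1 n.
  by move=> x /mapP[k' Hk' ->]; have [_ [_ [H _]]] := He k' Hk'; rewrite -(perm_mem Hp).
transitivity (count (mem S) (iota 1 n)).
  apply: eq_in_count => a Ha.
  have Haf : a \in flatten T by rewrite (perm_mem Hp).
  rewrite dim_pair_char // -/k /=.
  have [Hra _] := in_row Haf.
  have [Hca Ha'] := col_of_in Haf.
  apply/idP/idP.
  - case/and3P => /eqP H1 H2 H3.
    have Hin : row_of T a \in filter Q (iota 0 (size T)).
      by rewrite mem_filter mem_iota /= Hra /Q H1 H2 H3.
    have -> : a = e (row_of T a) by rewrite /e H1 /=.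
    exact: map_f.
  - case/mapP => k' Hk' ->.
    have [H1 [H2 [_ H4]]] := He k' Hk'.
    move: Hk'; rewrite mem_filter /Q => /andP[/and3P[_ H5 H6] _].
    by rewrite H1 H2 prednK // eqxx H5 H6.
rewrite -size_filter.
have -> : size [seq x <- iota 1 n | x \in S] = size S.
  apply: perm_size; apply: uniq_perm; rewrite ?filter_uniq ?iota_uniq //.
  move=> x; rewrite mem_filter; apply/andP/idP => [[]//|H]; split => //; exact: HSsub.
by rewrite /S size_map size_filter.
Qed.

Fixpoint positions (T : seq (seq nat)) i : seq (nat * nat) :=
  if i is i'.+1 then (row_of T i, col_of T i) :: positions T i' else [::].

Lemma count_split (s : seq nat) j : 0 < j ->
  count (fun x => x <= j) s = count (fun x => x <= j.-1) s + count_mem j s.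
Proof.
move=> Hj; elim: s => [|x s IH] //=; rewrite IH.
case: (ltngtP x j) => H.
- have A : x <= j.-1 by rewrite -ltnS prednK.
  by rewrite A add0n addnA.
- have A : (x <= j.-1) = false by apply/negbTE; rewrite -ltnNge (leq_ltn_trans (leq_pred j) H).
  by rewrite A !add0n.
- have A : (x <= j.-1) = false by apply/negbTE; rewrite -ltnNge H ltn_predL.
  by rewrite A add0n addnCA.
Qed.

Lemma rho_step T j : uniq (flatten T) -> row_strict T -> 0 < j -> j \in flatten T ->
  set_nth 0 (rho T j) (row_of T j) (nth 0 (rho T j) (row_of T j)).-1 = rho T j.-1.
Proof.
move=> HU HR Hj Hjf.
have [Hk Hjk] := in_row Hjf.
apply: (@eq_from_nth _ 0).
  by rewrite size_set_nth !size_map; apply/maxn_idPr.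
move=> i _; rewrite nth_set_nth /= !nth_rho.
case: eqP => [->|Hne].
  by rewrite count_split // count_uniq_mem ?row_uniq // Hjk addn1.
rewrite count_split // count_uniq_mem ?row_uniq //.
have -> : (j \in nth [::] T i) = false.
  by apply/negP => H; apply: Hne; rewrite (row_of_in HU H).
by rewrite addn0.
Qed.

Lemma expo_count T n alpha j : Phi n T = alpha -> 0 < j <= n ->
  expo alpha j = count (fun a => dim_pair T a j) (iota 1 n).
Proof.
move=> HPhi /andP[Hj Hjn].
case: j Hj Hjn => [|[|j]] // _ Hjn.
- rewrite /expo; apply/esym/eqP; rewrite -leqn0 leqNgt -has_count; apply/negP => /hasP[a].
  rewrite mem_iota => /andP[Ha _] /and3P[H _ _]; by move: (leq_trans H Ha); rewrite ltnn.
- rewrite /expo -HPhi /Phi subn2 /= (nth_map 0).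
  + by rewrite nth_iota // ltn_predRL.
  + by rewrite size_iota ltn_predRL.
Qed.

Lemma proc_ok T n alpha : perm_eq (flatten T) (iota 1 n) -> row_strict T ->
  Phi n T = alpha ->
  forall i, i <= n -> procedure alpha i (rho T i) = Some (positions T i).
Proof.
move=> Hp HR HPhi.
have HU : uniq (flatten T) by rewrite (perm_uniq Hp) iota_uniq.
elim=> [|i IH] Hi //; cbn [procedure].
have Hjf : i.+1 \in flatten T by rewrite (perm_mem Hp) mem_iota /= add1n ltnS Hi.
have Hrk := rho_row_of HU HR Hjf.
have [Hk _] := in_row Hjf.
rewrite (expo_count HPhi) ?Hi // (count_dim Hp HR Hjf).
have Hmem : row_of T i.+1 \in dim_order (rho T i.+1).
  by apply: dim_order_mem; rewrite ?Hrk // size_map.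
rewrite index_mem Hmem nth_index // Hrk /=.
have E : col_of T i.+1 = (nth 0 (rho T i.+1) (row_of T i.+1)).-1 by rewrite Hrk.
rewrite [X in set_nth _ _ _ X]E (rho_step HU HR _ Hjf) // /= IH //; exact: ltnW.
Qed.

Lemma pos_inj T a b : a \in flatten T -> b \in flatten T ->
  row_of T a = row_of T b -> col_of T a = col_of T b -> a = b.
Proof.
move=> Ha Hb E1 E2; have [_ Ha'] := col_of_in Ha; have [_ Hb'] := col_of_in Hb.
by rewrite -Ha' -Hb' E1 E2.
Qed.

Lemma index_positions T n i v : perm_eq (flatten T) (iota 1 n) -> i <= n ->
  0 < v <= i -> index (row_of T v, col_of T v) (positions T i) = i - v.
Proof.
move=> Hp Hin; elim: i Hin => [|i IH] Hin /andP[Hv Hvi] //=.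
case: (eqVneq v i.+1) => [->|Hne]; first by rewrite eqxx subnn.
have Hvi' : v <= i by rewrite -ltnS ltn_neqAle Hne Hvi.
have -> : ((row_of T i.+1, col_of T i.+1) == (row_of T v, col_of T v)) = false.
  apply/negP => /eqP [E1 E2]; move: Hne; rewrite (pos_inj _ _ E1 E2) ?eqxx //.
  + by rewrite (perm_mem Hp) mem_iota /= add1n ltnS.
  + by rewrite (perm_mem Hp) mem_iota /= add1n ltnS Hv (leq_trans Hvi Hin).
rewrite IH ?(ltnW Hin) ?Hv //.
by rewrite subSn.
Qed.

Lemma sum_count_nat (p : pred nat) s : \sum_(a <- s) (p a : nat) = count p s.
Proof. by rewrite -sumn_count sumnE big_map. Qed.

Theorem mainTheorem5 (n : nat) (mu alpha : seq nat) (r : nat) :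
  is_partition mu -> sumn mu = n ->
  in_A n mu alpha -> sumn alpha = r ->
  exists T, [/\ Psi n mu alpha = Some T, is_filling n mu T, row_strict T,
               num_dim_pairs n T = r & Phi n T = alpha].
Proof.
move=> _ _ [T [HF HR HPhi]] Hr.
move: (HF) => /andP[/eqP Hshape Hp].
have HU : uniq (flatten T) by rewrite (perm_uniq Hp) iota_uniq.
have Hrho : rho T n = mu.
  rewrite /rho -Hshape /shape; apply/eq_in_map => row Hrow.
  rewrite -count_predT; apply: eq_in_count => x Hx /=.
  have : x \in flatten T by apply/flattenP; exists row.
  by rewrite (perm_mem Hp) mem_iota add1n ltnS => /andP[_ ->].
have Hproc := proc_ok Hp HR HPhi (leqnn n).
rewrite Hrho in Hproc.
have Hfill : fill n mu (positions T n) = T.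
  rewrite /fill -Hshape size_map.
  transitivity (mkseq (nth [::] T) (size T)); last exact: mkseq_nth.
  apply/eq_in_map => k; rewrite mem_iota add0n => /andP[_ Hk].
  rewrite (nth_map [::]) //.
  transitivity (mkseq (nth 0 (nth [::] T k)) (size (nth [::] T k))); last exact: mkseq_nth.
  apply/eq_in_map => c; rewrite mem_iota add0n => /andP[_ Hc].
  have [E1 E2] := pos_entry HU HR Hc.
  set v := nth 0 (nth [::] T k) c in E1 E2 *.
  have : v \in flatten T by apply/flattenP; exists (nth [::] T k); [exact: mem_nth | exact: mem_nth].
  rewrite (perm_mem Hp) mem_iota add1n ltnS => Hv.
  by rewrite -{1}E1 -{1}E2 (index_positions Hp (leqnn n)) // subKn //; case/andP: Hv.
exists T; split => //.
- by rewrite /Psi Hproc Hfill.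
- rewrite /num_dim_pairs exchange_big /=.
  under eq_bigr do rewrite sum_count_nat.
  rewrite -Hr -HPhi /Phi sumnE big_map.
  case: n {Hp HF HPhi Hproc Hfill Hrho Hr Hshape} => [|m]; first by rewrite !big_nil.
  rewrite {1}(_ : iota 1 m.+1 = 1 :: iota 2 m) // big_cons.
  have -> : count (fun a => dim_pair T a 1) (iota 1 m.+1) = 0.
    apply/eqP; rewrite -leqn0 leqNgt -has_count; apply/negP => /hasP[a].
    rewrite mem_iota => /andP[Ha _] /and3P[H _ _]; by move: (leq_trans H Ha); rewrite ltnn.
  by rewrite add0n.
Qed.
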